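(* For every integer $n\ge 1$, $$\Delta_n=2^{-n}\,\frac{1}{2\pi i}\oint_C \mathbf{1}^{T}\,\frac{A(z)^{n-1}-A(1/z)^{n-1}}{1-z}\,\mathbf{1}\,dz,$$ where $A(z)=\begin{pmatrix}1 & 1/z\\ 1 & z\end{pmatrix}$, $\mathbf 1=(1,1)^T$, and $C$ is any positively oriented simple closed contour in $\mathbb C$ enclosing the origin (and not passing through $0$).
   Context: A fair coin is flipped $n$ times, producing a sequence $x_1,\dots,x_n\in\{H,T\}$ of independent uniformly random outcomes. Alice's score is the number of indices $i\in\{1,\dots,n-1\}$ with $(x_i,x_{i+1})=(H,H)$; Bob's score is the number of indices $i\in\{1,\dots,n-1\}$ with $(x_i,x_{i+1})=(H,T)$. Let $P_n(\mathrm{Bob})$ be the probability that Bob's score is strictly larger than Alice's, $P_n(\mathrm{Alice})$ the probability that Alice's score is strictly larger than Bob's, and $\Delta_n=P_n(\mathrm{Bob})-P_n(\mathrm{Alice})$. *)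

(* Defs.v *)
From Stdlib Require Import Reals List Arith.
From Coquelicot Require Import Coquelicot.
Import ListNotations.
Open Scope R_scope.

(* A coin sequence is a list of booleans: true = H, false = T. *)

Fixpoint count_pair (p q : bool) (l : list bool) : nat :=
  match l with
  | a :: ((b :: _) as t) =>
      (if andb (Bool.eqb a p) (Bool.eqb b q) then 1 else 0) + count_pair p q t
  | _ => 0
  end.

Definition alice_score (l : list bool) : nat := count_pair true true l.
Definition bob_score (l : list bool) : nat := count_pair true false l.

Fixpoint all_seqs (n : nat) : list (list bool) :=
  match n with
  | O => [[]]
  | S m => map (cons true) (all_seqs m) ++ map (cons false) (all_seqs m)
  end.

Definition prob_event (n : nat) (E : list bool -> bool) : R :=
  INR (length (filter E (all_seqs n))) / 2 ^ n.

Definition P_Bob (n : nat) : R :=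
  prob_event n (fun l => Nat.ltb (alice_score l) (bob_score l)).
Definition P_Alice (n : nat) : R :=
  prob_event n (fun l => Nat.ltb (bob_score l) (alice_score l)).
Definition Delta_n (n : nat) : R := P_Bob n - P_Alice n.

Record M2 := mkM2 { m11 : C; m12 : C; m21 : C; m22 : C }.

Definition M2mul (A B : M2) : M2 :=
  mkM2 (m11 A * m11 B + m12 A * m21 B)%C (m11 A * m12 B + m12 A * m22 B)%C
       (m21 A * m11 B + m22 A * m21 B)%C (m21 A * m12 B + m22 A * m22 B)%C.

Definition M2id : M2 := mkM2 1%C 0%C 0%C 1%C.

Fixpoint M2pow (A : M2) (k : nat) : M2 :=
  match k with O => M2id | S j => M2mul A (M2pow A j) end.

Definition ones_form (A : M2) : C := (m11 A + m12 A + m21 A + m22 A)%C.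

Definition Amat (z : C) : M2 := mkM2 1%C (/ z)%C 1%C z.

Definition integrand (n : nat) (z : C) : C :=
  ((ones_form (M2pow (Amat z) (n - 1)) - ones_form (M2pow (Amat (/ z)%C) (n - 1)))
     / (1 - z))%C.

Definition C1_on (g : R -> C) (a b : R) : Prop :=
  exists h h' : R -> C,
    (forall t, a <= t <= b -> h t = g t) /\
    (forall t, a <= t <= b ->
       @is_derive R_AbsRing C_R_NormedModule h t (h' t) /\ continuous h' t).

Definition piecewise_C1 (g : R -> C) : Prop :=
  exists (k : nat) (tt : nat -> R),
    (1 <= k)%nat /\ tt O = 0 /\ tt k = 1 /\
    (forall i, (i < k)%nat -> tt i < tt (S i) /\ C1_on g (tt i) (tt (S i))).

(* velocity of the parametrization (defined away from the finitely many breakpoints) *)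
Definition velocity (g : R -> C) (t : R) : C :=
  (Derive (fun s => fst (g s)) t, Derive (fun s => snd (g s)) t).

Definition contour_integral (g : R -> C) (f : C -> C) : C :=
  @RInt C_R_CompleteNormedModule (fun t => (f (g t) * velocity g t)%C) 0 1.

(* g is a positively oriented simple closed contour enclosing 0, not passing
   through 0.  "Encloses 0 and is positively oriented" is expressed by the
   winding number about 0 being 1. *)
Definition pos_simple_closed_contour_around_0 (g : R -> C) : Prop :=
  piecewise_C1 g /\
  g 0 = g 1 /\
  (forall s t, 0 <= s -> s < t -> t < 1 -> g s <> g t) /\
  (forall t, 0 <= t <= 1 -> g t <> 0%C) /\
  contour_integral g (fun z => / z)%C = (2 * PI * Ci)%C.

(* Main.v *)
Require Import Defs.
From Stdlib Require Import Reals Lra Lia ZArith List Classical.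
From Coquelicot Require Import Coquelicot.
Open Scope R_scope.


Lemma is_derive_C_split (f : R -> C) t (a b : R) :
  is_derive (fun s => fst (f s)) t a -> is_derive (fun s => snd (f s)) t b ->
  @is_derive R_AbsRing C_R_NormedModule f t (a,b).
Proof.
  intros Ha Hb.
  apply (filterdiff_ext (fun s => (fst (f s), snd (f s)))).
  { intros s; destruct (f s); reflexivity. }
  apply (filterdiff_ext_lin _ (fun y : R => (scal y a, scal y b))).
  - apply (filterdiff_comp_2 (fun s => fst (f s)) (fun s => snd (f s)) (fun x y => (x,y)) _ _ (fun x y => (x,y)) Ha Hb).
    apply filterdiff_linear. apply is_linear_prod; [apply is_linear_fst | apply is_linear_snd].
  - intros y; reflexivity.
Qed.

Lemma is_derive_C_fst (f : R -> C) t l : @is_derive R_AbsRing C_R_NormedModule f t l ->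
  is_derive (fun s => fst (f s)) t (fst l).
Proof.
  intros H.
  apply (filterdiff_ext_lin _ (fun y : R => fst (scal y l))).
  - apply (filterdiff_comp' f fst t _ fst H).
    apply filterdiff_linear. apply is_linear_fst.
  - intros y; reflexivity.
Qed.

Lemma is_derive_C_snd (f : R -> C) t l : @is_derive R_AbsRing C_R_NormedModule f t l ->
  is_derive (fun s => snd (f s)) t (snd l).
Proof.
  intros H.
  apply (filterdiff_ext_lin _ (fun y : R => snd (scal y l))).
  - apply (filterdiff_comp' f snd t _ snd H).
    apply filterdiff_linear. apply is_linear_snd.
  - intros y; reflexivity.
Qed.


Lemma is_derive_val {K : AbsRing} {V : NormedModule K} (f : K -> V) t l l' : l = l' -> is_derive f t l -> is_derive f t l'.
Proof. intros ->; auto. Qed.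

Definition CR_derive (f : R -> C) t (l : C) := @is_derive R_AbsRing C_R_NormedModule f t l.

Lemma CR_mult (f g : R -> C) t f' g' : CR_derive f t f' -> CR_derive g t g' ->
  CR_derive (fun s => (f s * g s)%C) t (f' * g t + f t * g')%C.
Proof.
  intros Hf Hg.
  pose proof (is_derive_C_fst _ _ _ Hf) as Hf1.
  pose proof (is_derive_C_snd _ _ _ Hf) as Hf2.
  pose proof (is_derive_C_fst _ _ _ Hg) as Hg1.
  pose proof (is_derive_C_snd _ _ _ Hg) as Hg2.
  unfold CR_derive.
  replace (f' * g t + f t * g')%C with (fst (f' * g t + f t * g')%C, snd (f' * g t + f t * g')%C) by (destruct (f' * g t + f t * g')%C; reflexivity).
  apply is_derive_C_split; simpl.
  - apply (is_derive_ext (fun s => minus (fst (f s) * fst (g s)) (snd (f s) * snd (g s)))).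
    { intros s; reflexivity. }
    eapply is_derive_val; [| apply (is_derive_minus (fun s => fst (f s) * fst (g s)) (fun s => snd (f s) * snd (g s))); apply Derive.is_derive_mult; eassumption].
    unfold minus, plus, opp; simpl; ring.
  - apply (is_derive_ext (fun s => plus (fst (f s) * snd (g s)) (snd (f s) * fst (g s)))).
    { intros s; reflexivity. }
    eapply is_derive_val; [| apply (is_derive_plus (fun s => fst (f s) * snd (g s)) (fun s => snd (f s) * fst (g s))); apply Derive.is_derive_mult; eassumption].
    unfold minus, plus, opp; simpl; ring.
Qed.

Lemma CR_inv (f : R -> C) t f' : CR_derive f t f' -> f t <> 0%C ->
  CR_derive (fun s => (/ f s)%C) t (- f' / (f t * f t))%C.
Proof.
  intros Hf Hnz.
  pose proof (is_derive_C_fst _ _ _ Hf) as Hf1.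
  pose proof (is_derive_C_snd _ _ _ Hf) as Hf2.
  assert (HN : fst (f t) ^ 2 + snd (f t) ^ 2 <> 0).
  { intro H0. apply Hnz. destruct (f t) as [u w]; simpl in *.
    assert (u = 0) by nra. assert (w = 0) by nra. subst; reflexivity. }
  assert (HD : is_derive (fun s => fst (f s) ^ 2 + snd (f s) ^ 2) t
     (INR 2 * fst f' * fst (f t) ^ 1 + INR 2 * snd f' * snd (f t) ^ 1)).
  { apply (is_derive_ext (fun s => plus (fst (f s) ^ 2) (snd (f s) ^ 2))). { intros; reflexivity. }
    apply (is_derive_plus (fun s => fst (f s) ^ 2) (fun s => snd (f s) ^ 2)); apply is_derive_pow; auto. }
  pose proof (is_derive_inv _ _ _ HD HN) as HI.
  unfold CR_derive.
  replace (- f' / (f t * f t))%C with (fst (- f' / (f t * f t))%C, snd (- f' / (f t * f t))%C) by (destruct (- f' / (f t * f t))%C; reflexivity).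
  apply is_derive_C_split; simpl.
  - apply (is_derive_ext (fun s => fst (f s) * / (fst (f s) ^ 2 + snd (f s) ^ 2))).
    { intros s; unfold Rdiv; reflexivity. }
    pose proof (Derive.is_derive_mult _ _ _ _ _ Hf1 HI) as H.
    eapply is_derive_val; [| exact H].
    destruct f' as [a b]; simpl in *.
    destruct (f t) as [u w]; simpl in *.
    assert (HN2: (u*u-w*w)*((u*u-w*w)*1) + (u*w+w*u)*((u*w+w*u)*1) <> 0).
    { replace ((u*u-w*w)*((u*u-w*w)*1) + (u*w+w*u)*((u*w+w*u)*1)) with ((u * (u * 1) + w * (w * 1)) * (u * (u * 1) + w * (w * 1))) by ring.
      apply Rmult_integral_contrapositive; tauto. }
    field; repeat split; auto; intro E; apply HN2; nra.
  - apply (is_derive_ext (fun s => (- snd (f s)) * / (fst (f s) ^ 2 + snd (f s) ^ 2))).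
    { intros s; unfold Rdiv; reflexivity. }
    pose proof (Derive.is_derive_mult _ _ _ _ _ (is_derive_opp (fun s => snd (f s)) _ _ Hf2) HI) as H.
    eapply is_derive_val; [| exact H].
    destruct f' as [a b]; simpl in *.
    destruct (f t) as [u w]; simpl in *.
    assert (HN2: (u*u-w*w)*((u*u-w*w)*1) + (u*w+w*u)*((u*w+w*u)*1) <> 0).
    { replace ((u*u-w*w)*((u*u-w*w)*1) + (u*w+w*u)*((u*w+w*u)*1)) with ((u * (u * 1) + w * (w * 1)) * (u * (u * 1) + w * (w * 1))) by ring.
      apply Rmult_integral_contrapositive; tauto. }
    unfold opp; simpl. field; repeat split; auto; intro E; apply HN2; nra.
Qed.


Definition zpow (z : C) (k : Z) : C :=
  if Z.leb 0 k then Cpow z (Z.to_nat k) else Cinv (Cpow z (Z.to_nat (- k))).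

Lemma zpow_nat z m : zpow z (Z.of_nat m) = Cpow z m.
Proof. unfold zpow. rewrite Nat2Z.id. destruct (Z.leb_spec 0 (Z.of_nat m)); [reflexivity| lia]. Qed.

Lemma zpow_neg z m : zpow z (- Z.of_nat (S m)) = Cinv (Cpow z (S m)).
Proof. unfold zpow. destruct (Z.leb_spec 0 (- Z.of_nat (S m))); [lia|].
  rewrite Z.opp_involutive, Nat2Z.id. reflexivity. Qed.

Lemma Z_cases k : exists m, k = Z.of_nat m \/ k = (- Z.of_nat (S m))%Z.
Proof.
  destruct (Z.leb_spec 0 k).
  - exists (Z.to_nat k). left. lia.
  - exists (Z.to_nat (- k - 1)). right. lia.
Qed.

Lemma CR_val (f : R -> C) t (l l' : C) : l = l' -> CR_derive f t l -> CR_derive f t l'.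
Proof. intros ->; auto. Qed.

Lemma CR_ext (f g : R -> C) t (l : C) : (forall s, f s = g s) -> CR_derive f t l -> CR_derive g t l.
Proof. intros H; apply is_derive_ext; auto. Qed.

Lemma CR_pow (f : R -> C) t f' m : CR_derive f t f' ->
  CR_derive (fun s => Cpow (f s) (S m)) t (RtoC (INR (S m)) * Cpow (f t) m * f')%C.
Proof.
  intros Hf. induction m.
  - apply (CR_ext f). { intros s; simpl; symmetry; apply Cmult_1_r. }
    eapply CR_val; [| exact Hf]. simpl. ring.
  - apply (CR_ext (fun s => (f s * Cpow (f s) (S m))%C)). { intros s; reflexivity. }
    eapply CR_val; [| exact (CR_mult _ _ _ _ _ Hf IHm)].
    rewrite (S_INR (S m)), RtoC_plus. simpl. ring.
Qed.

Lemma CR_zpow (f : R -> C) t f' j : CR_derive f t f' -> f t <> 0%C ->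
  CR_derive (fun s => zpow (f s) j) t (RtoC (IZR j) * zpow (f t) (j - 1) * f')%C.
Proof.
  intros Hf Hnz. destruct (Z_cases j) as [m [-> | ->]].
  - destruct m as [|m].
    + apply (CR_ext (fun _ => RtoC 1)). { intros s. rewrite zpow_nat. reflexivity. }
      eapply CR_val; [| apply is_derive_const]. transitivity (RtoC 0); [reflexivity|]. simpl; ring.
    + apply (CR_ext (fun s => Cpow (f s) (S m))). { intros s. rewrite zpow_nat. reflexivity. }
      eapply CR_val; [| exact (CR_pow _ _ _ m Hf)].
      replace (Z.of_nat (S m) - 1)%Z with (Z.of_nat m) by lia.
      rewrite zpow_nat, <- INR_IZR_INZ. reflexivity.
  - apply (CR_ext (fun s => Cinv (Cpow (f s) (S m)))). { intros s. rewrite zpow_neg. reflexivity. }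
    assert (Hp : Cpow (f t) (S m) <> 0%C) by (apply Cpow_nz; auto).
    eapply CR_val; [| exact (CR_inv _ _ _ (CR_pow _ _ _ m Hf) Hp)].
    replace (- Z.of_nat (S m) - 1)%Z with (- Z.of_nat (S (S m)))%Z by lia.
    rewrite zpow_neg, opp_IZR, <- INR_IZR_INZ, RtoC_opp.
    assert (Hm : Cpow (f t) m <> 0%C) by (apply Cpow_nz; auto).
    simpl. field. auto.
Qed.


Lemma cont_to_abs (f : R -> C) t : @continuous R_UniformSpace C_UniformSpace f t -> @continuous R_UniformSpace (AbsRing_UniformSpace C_AbsRing) f t.
Proof. intros H P HP. apply H. apply locally_C. exact HP. Qed.

Lemma cont_of_abs (f : R -> C) t : @continuous R_UniformSpace (AbsRing_UniformSpace C_AbsRing) f t -> @continuous R_UniformSpace C_UniformSpace f t.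
Proof. intros H P HP. apply H. apply locally_C. exact HP. Qed.

Lemma cont_Cmult (f g : R -> C) t : @continuous R_UniformSpace C_UniformSpace f t -> @continuous R_UniformSpace C_UniformSpace g t ->
  @continuous R_UniformSpace C_UniformSpace (fun s => (f s * g s)%C) t.
Proof.
  intros Hf Hg. apply cont_of_abs.
  apply (@continuous_mult R_UniformSpace C_AbsRing f g t); apply cont_to_abs; auto.
Qed.

Lemma CR_cont (f : R -> C) t l : CR_derive f t l -> @continuous R_UniformSpace C_UniformSpace f t.
Proof. intros H. apply (@ex_derive_continuous R_AbsRing C_R_NormedModule). exists l. exact H. Qed.


Definition CInt (f : R -> C) a b (v : C) := @is_RInt C_R_CompleteNormedModule f a b v.
Definition CexInt (f : R -> C) a b := @ex_RInt C_R_CompleteNormedModule f a b.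

Lemma vel_eq (g h h' : R -> C) a b t :
  (forall s, a <= s <= b -> h s = g s) ->
  CR_derive h t (h' t) -> a < t < b -> velocity g t = h' t.
Proof.
  intros Hhg Hd Ht.
  assert (Hloc : locally t (fun s => h s = g s)).
  { apply (locally_interval _ t a b); simpl; try lra. intros y Hy1 Hy2. apply Hhg; lra. }
  unfold velocity.
  rewrite <- (Derive_ext_loc (fun s => fst (h s)) (fun s => fst (g s))).
  2: { revert Hloc. apply filter_imp. intros s ->; reflexivity. }
  rewrite <- (Derive_ext_loc (fun s => snd (h s)) (fun s => snd (g s))).
  2: { revert Hloc. apply filter_imp. intros s ->; reflexivity. }
  assert (E1 : Derive (fun s => fst (h s)) t = fst (h' t)) by (apply is_derive_unique; apply is_derive_C_fst; exact Hd).
  assert (E2 : Derive (fun s => snd (h s)) t = snd (h' t)) by (apply is_derive_unique; apply is_derive_C_snd; exact Hd).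
  transitivity (fst (h' t), snd (h' t)).
  - f_equal; [exact E1 | exact E2].
  - destruct (h' t); reflexivity.
Qed.

Lemma piece_FTC (g : R -> C) a b j : a < b -> C1_on g a b -> (forall t, a <= t <= b -> g t <> 0%C) ->
  CInt (fun t => RtoC (IZR j) * zpow (g t) (j - 1) * velocity g t)%C a b (zpow (g b) j - zpow (g a) j)%C.
Proof.
  intros Hab [h [h' [Hhg Hd]]] Hnz.
  assert (Hmin : Rmin a b = a) by (apply Rmin_left; lra).
  assert (Hmax : Rmax a b = b) by (apply Rmax_right; lra).
  assert (Hh0 : forall t, a <= t <= b -> h t <> 0%C) by (intros t Ht; rewrite Hhg; auto).
  pose proof (@is_RInt_derive C_R_CompleteNormedModule (fun t => zpow (h t) j)
     (fun t => RtoC (IZR j) * zpow (h t) (j - 1) * h' t)%C a b) as HI.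
  rewrite Hmin, Hmax in HI.
  unfold CInt.
  replace (zpow (g b) j - zpow (g a) j)%C with (@minus C_R_CompleteNormedModule (zpow (h b) j) (zpow (h a) j)).
  2: { rewrite !Hhg by lra. reflexivity. }
  apply (is_RInt_ext (fun t => RtoC (IZR j) * zpow (h t) (j - 1) * h' t)%C).
  { rewrite Hmin, Hmax. intros t Ht. rewrite Hhg by lra. rewrite (vel_eq g h h' a b t Hhg (proj1 (Hd t ltac:(lra))) Ht). reflexivity. }
  apply HI.
  - intros t Ht. apply CR_zpow; [apply Hd; auto | apply Hh0; auto].
  - intros t Ht. apply cont_Cmult; [apply cont_Cmult|].
    + apply continuous_const.
    + apply (CR_cont _ _ _ (CR_zpow h t (h' t) (j - 1) (proj1 (Hd t Ht)) (Hh0 t Ht))).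
    + apply Hd; auto.
Qed.

Lemma piece_ex (g : R -> C) a b k : a < b -> C1_on g a b -> (forall t, a <= t <= b -> g t <> 0%C) ->
  CexInt (fun t => zpow (g t) k * velocity g t)%C a b.
Proof.
  intros Hab [h [h' [Hhg Hd]]] Hnz.
  assert (Hmin : Rmin a b = a) by (apply Rmin_left; lra).
  assert (Hmax : Rmax a b = b) by (apply Rmax_right; lra).
  assert (Hh0 : forall t, a <= t <= b -> h t <> 0%C) by (intros t Ht; rewrite Hhg; auto).
  unfold CexInt.
  apply (ex_RInt_ext (fun t => zpow (h t) k * h' t)%C).
  { rewrite Hmin, Hmax. intros t Ht. rewrite Hhg by lra. rewrite (vel_eq g h h' a b t Hhg (proj1 (Hd t ltac:(lra))) Ht). reflexivity. }
  apply (@ex_RInt_continuous C_R_CompleteNormedModule).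
  rewrite Hmin, Hmax. intros t Ht. apply cont_Cmult.
  + apply (CR_cont _ _ _ (CR_zpow h t (h' t) k (proj1 (Hd t Ht)) (Hh0 t Ht))).
  + apply Hd; auto.
Qed.


Lemma CInt_ext (f f' : R -> C) a b (v v' : C) : CInt f a b v -> v = v' -> (forall t, f t = f' t) -> CInt f' a b v'.
Proof. intros H -> He. unfold CInt. apply (is_RInt_ext f). { intros; auto. } exact H. Qed.

Lemma CInt_Chasles (f : R -> C) a b c v1 v2 : CInt f a b v1 -> CInt f b c v2 -> CInt f a c (v1 + v2)%C.
Proof. intros H1 H2. exact (@is_RInt_Chasles C_R_CompleteNormedModule f a b c v1 v2 H1 H2). Qed.


Lemma tt_mono (g : R -> C) (K : nat) (tt : nat -> R) (H0 : tt O = 0) (H1 : tt K = 1) (Hp : forall i, (i < K)%nat -> tt i < tt (S i) /\ C1_on g (tt i) (tt (S i))) (Hnz : forall t, 0 <= t <= 1 -> g t <> 0%C) i j : (i <= j <= K)%nat -> tt i <= tt j.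
Proof.
  intros [Hij HjK]. induction Hij.
  - lra.
  - assert (tt m < tt (S m)) by (apply Hp; lia). specialize (IHHij ltac:(lia)). lra.
Qed.

Lemma tt_range (g : R -> C) (K : nat) (tt : nat -> R) (H0 : tt O = 0) (H1 : tt K = 1) (Hp : forall i, (i < K)%nat -> tt i < tt (S i) /\ C1_on g (tt i) (tt (S i))) (Hnz : forall t, 0 <= t <= 1 -> g t <> 0%C) i : (i <= K)%nat -> 0 <= tt i <= 1.
Proof.
  intros Hi. split.
  - rewrite <- H0. apply (tt_mono g K tt H0 H1 Hp Hnz); lia.
  - rewrite <- H1. apply (tt_mono g K tt H0 H1 Hp Hnz); lia.
Qed.

Lemma piece_nz (g : R -> C) (K : nat) (tt : nat -> R) (H0 : tt O = 0) (H1 : tt K = 1) (Hp : forall i, (i < K)%nat -> tt i < tt (S i) /\ C1_on g (tt i) (tt (S i))) (Hnz : forall t, 0 <= t <= 1 -> g t <> 0%C) i : (i < K)%nat -> forall t, tt i <= t <= tt (S i) -> g t <> 0%C.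
Proof.
  intros Hi t Ht. apply Hnz. pose proof (tt_range g K tt H0 H1 Hp Hnz i ltac:(lia)). pose proof (tt_range g K tt H0 H1 Hp Hnz (S i) ltac:(lia)). lra.
Qed.

Lemma glob_FTC (g : R -> C) (K : nat) (tt : nat -> R) (H0 : tt O = 0) (H1 : tt K = 1) (Hp : forall i, (i < K)%nat -> tt i < tt (S i) /\ C1_on g (tt i) (tt (S i))) (Hnz : forall t, 0 <= t <= 1 -> g t <> 0%C) j : forall i, (i <= K)%nat ->
  CInt (fun t => RtoC (IZR j) * zpow (g t) (j - 1) * velocity g t)%C 0 (tt i) (zpow (g (tt i)) j - zpow (g 0) j)%C.
Proof.
  induction i; intros Hi.
  - eapply CInt_ext; [ rewrite <- H0; apply is_RInt_point | | reflexivity].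
    rewrite H0. transitivity (RtoC 0); [reflexivity | ring].
  - eapply CInt_ext; [ apply (CInt_Chasles _ _ (tt i)); [apply IHi; lia | apply piece_FTC] | | reflexivity].
    + apply Hp; lia.
    + apply Hp; lia.
    + apply (piece_nz g K tt H0 H1 Hp Hnz); lia.
    + ring.
Qed.

Lemma glob_ex (g : R -> C) (K : nat) (tt : nat -> R) (H0 : tt O = 0) (H1 : tt K = 1) (Hp : forall i, (i < K)%nat -> tt i < tt (S i) /\ C1_on g (tt i) (tt (S i))) (Hnz : forall t, 0 <= t <= 1 -> g t <> 0%C) k : forall i, (i <= K)%nat ->
  CexInt (fun t => zpow (g t) k * velocity g t)%C 0 (tt i).
Proof.
  induction i; intros Hi.
  - rewrite H0. apply ex_RInt_point.
  - apply (ex_RInt_Chasles _ _ (tt i)); [apply IHi; lia | apply piece_ex].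
    + apply Hp; lia.
    + apply Hp; lia.
    + apply (piece_nz g K tt H0 H1 Hp Hnz); lia.
Qed.


Definition Ival (k : Z) : C := if Z.eq_dec k (-1) then (2 * PI * Ci)%C else 0%C.

Lemma mono (g : R -> C) (Hg : pos_simple_closed_contour_around_0 g) k :
  CInt (fun t => zpow (g t) k * velocity g t)%C 0 1 (Ival k).
Proof.
  destruct Hg as [[K [tt [HK [H0 [H1 Hp]]]]] [Hclosed [Hinj [Hnz Hwind]]]].
  unfold Ival. destruct (Z.eq_dec k (-1)) as [Hk | Hk].
  - subst k. pose proof (glob_ex g K tt H0 H1 Hp Hnz (-1) K (le_n K)) as HE.
    rewrite H1 in HE.
    eapply CInt_ext; [apply (RInt_correct _ _ _ HE) | | reflexivity].
    rewrite <- Hwind. unfold contour_integral. apply (@RInt_ext C_R_CompleteNormedModule).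
    intros t _. unfold zpow. simpl. rewrite Cmult_1_r. reflexivity.
  - pose proof (glob_FTC g K tt H0 H1 Hp Hnz (k + 1) K (le_n K)) as HF.
    rewrite H1, <- Hclosed in HF.
    assert (Hj : IZR (k + 1) <> 0) by (apply not_0_IZR; lia).
    pose proof (@is_RInt_scal C_R_CompleteNormedModule _ 0 1 (/ IZR (k + 1)) _ HF) as HS.
    eapply CInt_ext; [exact HS | |].
    + transitivity (scal (/ IZR (k + 1)) (@zero C_R_CompleteNormedModule)).
      * f_equal. transitivity (RtoC 0); [ring | reflexivity].
      * apply (@scal_zero_r R_Ring C_R_ModuleSpace).
    + intros t. etransitivity; [apply scal_R_Cmult|]. replace (k + 1 - 1)%Z with k by ring.
      rewrite RtoC_inv by auto. field. intro E. apply Hj. injection E; auto.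
Qed.


Fixpoint ssum (f : nat -> C) (N : nat) : C :=
  match N with O => 0%C | S N => (ssum f N + f N)%C end.

Definition csum {A} (f : A -> C) (L : list A) : C := fold_right (fun x acc => (f x + acc)%C) 0%C L.

Lemma CInt_zero (g : R -> C) : CInt (fun t => 0%C * velocity g t)%C 0 1 0%C.
Proof.
  eapply CInt_ext; [apply (@is_RInt_const C_R_CompleteNormedModule 0 1 (RtoC 0)) | |].
  - etransitivity; [apply scal_R_Cmult|]. apply Cmult_0_r.
  - intros t. cbv beta. ring.
Qed.

Lemma CInt_plus (f1 f2 : R -> C) a b v1 v2 : CInt f1 a b v1 -> CInt f2 a b v2 -> CInt (fun t => f1 t + f2 t)%C a b (v1 + v2)%C.
Proof. intros H1 H2. exact (@is_RInt_plus C_R_CompleteNormedModule f1 f2 a b v1 v2 H1 H2). Qed.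

Lemma CInt_opp (f : R -> C) a b v : CInt f a b v -> CInt (fun t => - f t)%C a b (- v)%C.
Proof. intros H. exact (@is_RInt_opp C_R_CompleteNormedModule f a b v H). Qed.

Lemma ssum_int (g : R -> C) (F : nat -> C -> C) (I : nat -> C) N :
  (forall j, (j < N)%nat -> CInt (fun t => F j (g t) * velocity g t)%C 0 1 (I j)) ->
  CInt (fun t => ssum (fun j => F j (g t)) N * velocity g t)%C 0 1 (ssum I N).
Proof.
  induction N; intros H.
  - apply CInt_zero.
  - simpl. eapply CInt_ext; [apply CInt_plus; [apply IHN; intros; apply H; lia | apply (H N); lia] | reflexivity |].
    intros t. cbv beta. ring.
Qed.

Lemma csum_int {A} (g : R -> C) (F : A -> C -> C) (I : A -> C) L :
  (forall x, CInt (fun t => F x (g t) * velocity g t)%C 0 1 (I x)) ->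
  CInt (fun t => csum (fun x => F x (g t)) L * velocity g t)%C 0 1 (csum I L).
Proof.
  intros H. induction L as [|x L IH].
  - apply CInt_zero.
  - simpl. eapply CInt_ext; [apply CInt_plus; [apply (H x) | apply IH] | reflexivity |].
    intros t. cbv beta. ring.
Qed.

Definition Spoly (e : nat) (z : C) : C := ssum (fun j => zpow z (- Z.of_nat e + Z.of_nat j)) (2 * e).

Lemma ssum_Ival e N : ssum (fun j => Ival (- Z.of_nat e + Z.of_nat j)) N =
  (if andb (Nat.leb 1 e) (Nat.ltb (e - 1) N) then 2 * PI * Ci else 0)%C.
Proof.
  induction N.
  - cbn [ssum]. destruct (Nat.leb_spec 1 e), (Nat.ltb_spec (e-1) 0); simpl; try reflexivity; lia.
  - simpl ssum. rewrite IHN. unfold Ival.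
    destruct (Z.eq_dec (- Z.of_nat e + Z.of_nat N) (-1)) as [E|E];
    destruct (Nat.leb_spec 1 e); destruct (Nat.ltb_spec (e - 1) N);
    destruct (Nat.ltb_spec (e - 1) (S N)); simpl; try ring; lia.
Qed.

Definition Sval (e : nat) : C := if Nat.eqb e 0 then 0%C else (2 * PI * Ci)%C.

Lemma S_int g (Hg : pos_simple_closed_contour_around_0 g) e :
  CInt (fun t => Spoly e (g t) * velocity g t)%C 0 1 (Sval e).
Proof.
  eapply CInt_ext; [apply (ssum_int g (fun j z => zpow z (- Z.of_nat e + Z.of_nat j)) (fun j => Ival (- Z.of_nat e + Z.of_nat j))) | | reflexivity].
  - intros j _. apply mono; auto.
  - rewrite ssum_Ival. unfold Sval. destruct e; simpl; [reflexivity|].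
    destruct (Nat.ltb_spec (e - 0) (S (e + S (e + 0)))); [reflexivity | lia].
Qed.

Definition Qpoly (d : Z) (z : C) : C :=
  if Z.leb 0 d then (- Spoly (Z.to_nat d) z)%C else Spoly (Z.to_nat (- d)) z.
Definition Qval (d : Z) : C :=
  if Z.leb 0 d then (- Sval (Z.to_nat d))%C else Sval (Z.to_nat (- d)).

Lemma Q_int g (Hg : pos_simple_closed_contour_around_0 g) d :
  CInt (fun t => Qpoly d (g t) * velocity g t)%C 0 1 (Qval d).
Proof.
  unfold Qpoly, Qval. destruct (Z.leb 0 d).
  - eapply CInt_ext; [apply CInt_opp; apply (S_int g Hg) | reflexivity |]. intros t; cbv beta; ring.
  - apply S_int; auto.
Qed.


Lemma zpow_succ (z : C) k : z <> 0%C -> zpow z (k + 1) = (z * zpow z k)%C.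
Proof.
  intros Hz. destruct (Z_cases k) as [m [-> | ->]].
  - replace (Z.of_nat m + 1)%Z with (Z.of_nat (S m)) by lia.
    rewrite !zpow_nat. reflexivity.
  - destruct m as [|m].
    + replace (- Z.of_nat 1 + 1)%Z with (Z.of_nat 0) by lia.
      rewrite zpow_nat, zpow_neg. simpl. field. auto.
    + replace (- Z.of_nat (S (S m)) + 1)%Z with (- Z.of_nat (S m))%Z by lia.
      rewrite !zpow_neg. assert (Cpow z m <> 0%C) by (apply Cpow_nz; auto).
      simpl. field. auto.
Qed.

Lemma zpow_pred (z : C) k : z <> 0%C -> zpow z (k - 1) = (/ z * zpow z k)%C.
Proof.
  intros Hz. replace (zpow z k) with (zpow z ((k - 1) + 1)) by (f_equal; lia).
  rewrite zpow_succ by auto. field. auto.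
Qed.

Lemma zpow_inv (z : C) d : z <> 0%C -> zpow (/ z) d = zpow z (- d).
Proof.
  intros Hz. destruct (Z_cases d) as [m [-> | ->]].
  - destruct m as [|m].
    + simpl. reflexivity.
    + rewrite zpow_nat, zpow_neg, Cpow_inv; auto.
  - rewrite Z.opp_involutive, zpow_nat, zpow_neg.
    rewrite Cpow_inv by auto. field. apply Cpow_nz; auto.
Qed.

Lemma telescope (z : C) a N : z <> 0%C ->
  ((1 - z) * ssum (fun j => zpow z (a + Z.of_nat j)) N = zpow z a - zpow z (a + Z.of_nat N))%C.
Proof.
  intros Hz. induction N.
  - simpl. replace (a + 0)%Z with a by lia. ring.
  - simpl ssum. replace (a + Z.of_nat (S N))%Z with ((a + Z.of_nat N) + 1)%Z by lia.
    rewrite zpow_succ by auto.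
    replace ((1 - z) * (ssum (fun j => zpow z (a + Z.of_nat j)) N + zpow z (a + Z.of_nat N)))%C
      with ((1 - z) * ssum (fun j => zpow z (a + Z.of_nat j)) N + (1 - z) * zpow z (a + Z.of_nat N))%C by ring.
    rewrite IHN. ring.
Qed.

Lemma Spoly_id e (z : C) : z <> 0%C -> ((1 - z) * Spoly e z = zpow z (- Z.of_nat e) - zpow z (Z.of_nat e))%C.
Proof.
  intros Hz. unfold Spoly. rewrite telescope by auto. f_equal. f_equal. lia.
Qed.

Lemma Qpoly_id d (z : C) : z <> 0%C -> ((1 - z) * Qpoly d z = zpow z d - zpow z (- d))%C.
Proof.
  intros Hz. unfold Qpoly. destruct (Z.leb_spec 0 d).
  - replace ((1 - z) * - Spoly (Z.to_nat d) z)%C with (- ((1 - z) * Spoly (Z.to_nat d) z))%C by ring.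
    rewrite Spoly_id by auto. rewrite Z2Nat.id by lia. ring.
  - rewrite Spoly_id by auto. rewrite Z2Nat.id by lia. rewrite Z.opp_involutive. reflexivity.
Qed.

Lemma csum_app {A} (f : A -> C) L1 L2 : csum f (L1 ++ L2) = (csum f L1 + csum f L2)%C.
Proof. induction L1; simpl; [ring | rewrite IHL1; ring]. Qed.

Lemma csum_map {A B} (f : B -> C) (h : A -> B) L : csum f (map h L) = csum (fun x => f (h x)) L.
Proof. induction L; simpl; [reflexivity | rewrite IHL; reflexivity]. Qed.

Lemma csum_scal {A} (c : C) (f : A -> C) L : csum (fun x => c * f x)%C L = (c * csum f L)%C.
Proof. induction L; simpl; [ring | rewrite IHL; ring]. Qed.

Lemma csum_plus {A} (f1 f2 : A -> C) L : csum (fun x => f1 x + f2 x)%C L = (csum f1 L + csum f2 L)%C.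
Proof. induction L; simpl; [ring | rewrite IHL; ring]. Qed.

Lemma csum_ext {A} (f1 f2 : A -> C) L : (forall x, f1 x = f2 x) -> csum f1 L = csum f2 L.
Proof. intros H; induction L; simpl; [reflexivity | rewrite IHL, H; reflexivity]. Qed.

Definition Dsc (l : list bool) : Z := (Z.of_nat (alice_score l) - Z.of_nat (bob_score l))%Z.

Definition cw (b b' : bool) : Z := if b then (if b' then 1 else -1)%Z else 0%Z.

Lemma count_pair_cons2 p q a b l : count_pair p q (a :: b :: l) =
  ((if andb (Bool.eqb a p) (Bool.eqb b q) then 1 else 0) + count_pair p q (b :: l))%nat.
Proof. reflexivity. Qed.

Lemma Dsc_cons2 b b' l : Dsc (b :: b' :: l) = (cw b b' + Dsc (b' :: l))%Z.
Proof. unfold Dsc, alice_score, bob_score. rewrite !count_pair_cons2.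
  destruct b, b'; cbn [Bool.eqb andb cw]; lia. Qed.

Definition W (z : C) (b : bool) m := csum (fun l => zpow z (Dsc (b :: l))) (all_seqs m).

Lemma W_true (z : C) m : z <> 0%C -> W z true (S m) = (z * W z true m + / z * W z false m)%C.
Proof.
  intros Hz. unfold W. simpl all_seqs. rewrite csum_app, !csum_map.
  rewrite <- !csum_scal. f_equal; apply csum_ext; intros l; rewrite Dsc_cons2; simpl cw.
  - rewrite Z.add_comm, zpow_succ; auto.
  - replace (-1 + Dsc (false :: l))%Z with (Dsc (false :: l) - 1)%Z by lia. rewrite zpow_pred; auto.
Qed.

Lemma W_false (z : C) m : W z false (S m) = (W z true m + W z false m)%C.
Proof.
  unfold W. simpl all_seqs. rewrite csum_app, !csum_map.
  f_equal; apply csum_ext; intros l; rewrite Dsc_cons2; reflexivity.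
Qed.

Lemma M2mul_assoc A1 A2 A3 : M2mul A1 (M2mul A2 A3) = M2mul (M2mul A1 A2) A3.
Proof. destruct A1, A2, A3; unfold M2mul; simpl. f_equal; ring. Qed.

Lemma M2pow_S_r A m : M2pow A (S m) = M2mul (M2pow A m) A.
Proof.
  induction m.
  - destruct A; cbn [M2pow]; unfold M2mul, M2id; simpl. f_equal; ring.
  - change (M2pow A (S (S m))) with (M2mul A (M2pow A (S m))).
    rewrite IHm at 1. rewrite M2mul_assoc. reflexivity.
Qed.

Lemma colsums (z : C) m : z <> 0%C ->
  (m11 (M2pow (Amat z) m) + m21 (M2pow (Amat z) m) = W z false m)%C /\
  (m12 (M2pow (Amat z) m) + m22 (M2pow (Amat z) m) = W z true m)%C.
Proof.
  intros Hz. induction m.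
  - unfold W; simpl. unfold Dsc, zpow; simpl. split; ring.
  - rewrite M2pow_S_r, W_true, W_false by auto. destruct IHm as [I1 I2].
    destruct (M2pow (Amat z) m) as [b11 b12 b21 b22]; simpl in *.
    rewrite <- I1, <- I2. split; ring.
Qed.

Lemma ones_form_sum (z : C) m : z <> 0%C ->
  ones_form (M2pow (Amat z) m) = csum (fun l => zpow z (Dsc l)) (all_seqs (S m)).
Proof.
  intros Hz. destruct (colsums z m Hz) as [I1 I2].
  simpl all_seqs. rewrite csum_app, !csum_map. fold (W z true m). fold (W z false m).
  rewrite <- I1, <- I2. unfold ones_form. ring.
Qed.


Lemma modify1 (f h : R -> C) a b v t1 : a <= b -> CInt f a b v ->
  (forall t, a < t < b -> t <> t1 -> f t = h t) -> CInt h a b v.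
Proof.
  intros Hab Hf Hfh.
  assert (Hmin : Rmin a b = a) by (apply Rmin_left; lra).
  assert (Hmax : Rmax a b = b) by (apply Rmax_right; lra).
  destruct (classic (a < t1 < b)) as [Ht | Ht].
  - assert (Hex : CexInt f a b) by (exists v; exact Hf).
    assert (H1 : CexInt f a t1) by (apply (@ex_RInt_Chasles_1 C_R_CompleteNormedModule _ _ _ b); [lra | exact Hex]).
    assert (H2 : CexInt f t1 b) by (apply (@ex_RInt_Chasles_2 C_R_CompleteNormedModule _ a); [lra | exact Hex]).
    assert (Hv : v = (@RInt C_R_CompleteNormedModule f a t1 + @RInt C_R_CompleteNormedModule f t1 b)%C).
    { rewrite <- (@is_RInt_unique C_R_CompleteNormedModule f a b v Hf).
      symmetry. exact (@RInt_Chasles C_R_CompleteNormedModule f a t1 b H1 H2). }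
    rewrite Hv. apply (CInt_Chasles _ _ t1).
    + unfold CInt. apply (is_RInt_ext f).
      { rewrite Rmin_left, Rmax_right by lra. intros t Ht'. apply Hfh; lra. }
      apply (@RInt_correct C_R_CompleteNormedModule). exact H1.
    + unfold CInt. apply (is_RInt_ext f).
      { rewrite Rmin_left, Rmax_right by lra. intros t Ht'. apply Hfh; lra. }
      apply (@RInt_correct C_R_CompleteNormedModule). exact H2.
  - unfold CInt. apply (is_RInt_ext f).
    { rewrite Hmin, Hmax. intros t Ht'. apply Hfh; auto. intro E. subst. tauto. }
    exact Hf.
Qed.

Lemma Cinv_nz (z : C) : z <> 0%C -> (/ z)%C <> 0%C.
Proof. intros Hz E. pose proof (Cinv_l z Hz) as H. rewrite E, Cmult_0_l in H. apply C1_nz. auto. Qed.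

Lemma csum_minus {A} (f1 f2 : A -> C) L : csum (fun x => f1 x - f2 x)%C L = (csum f1 L - csum f2 L)%C.
Proof. induction L; simpl; [ring | rewrite IHL; ring]. Qed.

Lemma integrand_eq m (z : C) : z <> 0%C -> z <> 1%C ->
  integrand (S m) z = csum (fun l => Qpoly (Dsc l) z) (all_seqs (S m)).
Proof.
  intros Hz H1. unfold integrand. replace (S m - 1)%nat with m by lia.
  rewrite (ones_form_sum z m Hz), (ones_form_sum (/ z) m (Cinv_nz z Hz)).
  rewrite (csum_ext (fun l => zpow (/ z) (Dsc l)) (fun l => zpow z (- Dsc l))).
  2: { intros l; apply zpow_inv; auto. }
  assert (E : ((1 - z) * csum (fun l => Qpoly (Dsc l) z) (all_seqs (S m)) =
     csum (fun l => zpow z (Dsc l)) (all_seqs (S m)) - csum (fun l => zpow z (- Dsc l)) (all_seqs (S m)))%C).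
  { rewrite <- csum_scal, <- csum_minus. apply csum_ext. intros l. apply Qpoly_id; auto. }
  rewrite <- E. field. intro E2. apply H1. 
  replace z with (1 - (1 - z))%C by ring. rewrite E2. ring.
Qed.

Lemma count_Qval L : csum (fun l => Qval (Dsc l)) L =
  (2 * PI * Ci * (RtoC (INR (length (filter (fun l => Nat.ltb (alice_score l) (bob_score l)) L)))
               - RtoC (INR (length (filter (fun l => Nat.ltb (bob_score l) (alice_score l)) L)))))%C.
Proof.
  induction L as [|x L IH].
  - simpl. ring.
  - cbn [csum fold_right filter]. fold (csum (fun l => Qval (Dsc l)) L). rewrite IH.
    unfold Qval, Dsc, Sval.
    destruct (Nat.ltb_spec (alice_score x) (bob_score x));
    destruct (Nat.ltb_spec (bob_score x) (alice_score x)); try lia.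
    + destruct (Z.leb_spec 0 (Z.of_nat (alice_score x) - Z.of_nat (bob_score x))); try lia.
      destruct (Nat.eqb_spec (Z.to_nat (- (Z.of_nat (alice_score x) - Z.of_nat (bob_score x)))) 0); try lia.
      cbn [length]. rewrite S_INR, RtoC_plus. ring.
    + destruct (Z.leb_spec 0 (Z.of_nat (alice_score x) - Z.of_nat (bob_score x))); try lia.
      destruct (Nat.eqb_spec (Z.to_nat (Z.of_nat (alice_score x) - Z.of_nat (bob_score x))) 0); try lia.
      cbn [length]. rewrite S_INR, RtoC_plus. ring.
    + destruct (Z.leb_spec 0 (Z.of_nat (alice_score x) - Z.of_nat (bob_score x))); try lia.
      destruct (Nat.eqb_spec (Z.to_nat (Z.of_nat (alice_score x) - Z.of_nat (bob_score x))) 0); try lia.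
      ring.
Qed.

Theorem mainTheorem2 :
  forall (n : nat), (1 <= n)%nat ->
  forall (g : R -> C), pos_simple_closed_contour_around_0 g ->
    RtoC (Delta_n n) =
      (RtoC (Rinv (pow 2 n)) * / (2 * PI * Ci) * contour_integral g (integrand n))%C.
Proof.
  intros n Hn g Hg.
  destruct n as [|m]; [lia|].
  pose proof (csum_int g (fun l z => Qpoly (Dsc l) z) (fun l => Qval (Dsc l)) (all_seqs (S m))
     (fun l => Q_int g Hg (Dsc l))) as HI.
  assert (HM : CInt (fun t => integrand (S m) (g t) * velocity g t)%C 0 1
                 (csum (fun l => Qval (Dsc l)) (all_seqs (S m)))).
  { destruct Hg as [_ [Hcl [Hinj [Hnz _]]]].
    destruct (classic (exists t1, 0 < t1 < 1 /\ g t1 = 1%C)) as [[t1 [Ht1 Hg1]] | Hno].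
    - eapply (modify1 _ _ 0 1 _ t1); [lra | exact HI |].
      intros t Ht Htt. rewrite integrand_eq; auto.
      + apply Hnz; lra.
      + intro E. destruct (Rlt_or_le t t1) as [Hlt | Hle].
        * apply (Hinj t t1); try lra. rewrite E, Hg1. reflexivity.
        * apply (Hinj t1 t); try lra. rewrite E, Hg1. reflexivity.
    - eapply (modify1 _ _ 0 1 _ 0); [lra | exact HI |].
      intros t Ht Htt. rewrite integrand_eq; auto.
      + apply Hnz; lra.
      + intro E. apply Hno. exists t. split; auto. }
  unfold contour_integral. rewrite (@is_RInt_unique C_R_CompleteNormedModule _ _ _ _ HM).
  rewrite count_Qval.
  unfold Delta_n, P_Bob, P_Alice, prob_event.
  assert (Hp : 2 ^ S m <> 0) by (apply pow_nonzero; lra).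
  assert (HpC : RtoC (2 ^ S m) <> 0%C) by (intro E; apply Hp; injection E; auto).
  assert (Hpi : (2 * PI * Ci)%C <> 0%C).
  { apply Cmult_neq_0; [apply Cmult_neq_0 | apply Ci_nz].
    - intro E; injection E; lra.
    - intro E; injection E; pose proof PI_RGT_0; lra. }
  rewrite RtoC_minus, !RtoC_div, RtoC_inv by auto.
  field. split; [apply Ci_nz|split]; [intro E; injection E; pose proof PI_RGT_0; lra | try exact HpC].
Qed.
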